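(* Let $F$ be an integral form, and assume that $F$ has a simple linear factor over $\mathbb{Q}_p$, i.e. there is a non-zero linear form $L$ with coefficients in $\mathbb{Q}_p$ such that $L$ divides $F$ but $L^2$ does not divide $F$ in $\mathbb{Q}_p[x_0,\dots,x_r]$. Then $R(F)$ is dense in $\mathbb{Q}_p$.
   Context: An integral form is a homogeneous polynomial with integer coefficients. For an integral form $F$ in $r+1$ variables, $R(F)=\{F(\overline{x})/F(\overline{y}) : \overline{x},\overline{y}\in\mathbb{Z}^{r+1},\ F(\overline{y})\neq 0\}$; density is in the $p$-adic topology. *)

(* Defs.v *)
From HB Require Import structures.
From mathcomp Require Import all_boot all_order all_algebra.
From mathcomp Require Import mpoly.
Set Implicit Arguments. Unset Strict Implicit. Unset Printing Implicit Defensive.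
Import Order.TTheory GRing.Theory Num.Theory.
Local Open Scope ring_scope.

Definition padic_val (p : nat) (q : rat) : int :=
  (logn p `|numq q|%N)%:Z - (logn p (`|denq q|%N))%:Z.

Definition padic_abs (p : nat) (q : rat) : rat :=
  if q == 0 then 0 else (p%:R : rat) ^ (- padic_val p q).

(* (K, abs) is a model of the field Q_p: a field with a non-archimedean
   absolute value extending |.|_p on Q, in which Q is dense and which is
   complete.  Such a field is the completion of (Q,|.|_p), unique up to
   isometric isomorphism.  Absolute values take values in p^Z ∪ {0} ⊂ Q,
   so we let them be rational-valued. *)
Record is_Qp (p : nat) (K : fieldType) (abs : K -> rat) : Prop := {
  Qp_abs_ge0 : forall x, 0 <= abs x;
  Qp_abs_eq0 : forall x, abs x = 0 <-> x = 0;
  Qp_absM : forall x y, abs (x * y) = abs x * abs y;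
  Qp_abs_ultra : forall x y, abs (x + y) <= Num.max (abs x) (abs y);
  Qp_abs_rat : forall q : rat, abs (ratr q) = padic_abs p q;
  Qp_Q_dense : forall (x : K) (eps : rat), 0 < eps ->
      exists q : rat, abs (x - ratr q) < eps;
  Qp_complete : forall u : nat -> K,
      (forall eps : rat, 0 < eps -> exists N, forall m n, (N <= m)%N -> (N <= n)%N ->
          abs (u m - u n) < eps) ->
      exists l : K, forall eps : rat, 0 < eps -> exists N, forall n, (N <= n)%N ->
          abs (u n - l) < eps
}.

(* R(F) = { F(x)/F(y) : x, y in Z^(r+1), F(y) <> 0 } as a subset of Q *)
Definition ratio_set (r : nat) (F : {mpoly int[r.+1]}) : rat -> Prop :=
  fun q => exists x y : 'I_r.+1 -> int,
    let FQ := map_mpoly (fun z : int => (z%:~R : rat)) F in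
    FQ.@[fun i => (y i)%:~R] != 0 /\
    q = FQ.@[fun i => (x i)%:~R] / FQ.@[fun i => (y i)%:~R].

Definition dense_in (K : fieldType) (abs : K -> rat) (S : rat -> Prop) : Prop :=
  forall (z : K) (eps : rat), 0 < eps -> exists q, S q /\ abs (z - ratr q) < eps.

Definition mdivides (n : nat) (R : ringType) (a b : {mpoly R[n]}) : Prop :=
  exists c : {mpoly R[n]}, b = a * c.

(* Main.v *)
Require Import Defs.
From HB Require Import structures.
From mathcomp Require Import all_boot all_order all_algebra.
From mathcomp Require Import mpoly.
From mathcomp Require Import ring lra zify.
Import Order.TTheory GRing.Theory Num.Theory.
Local Open Scope ring_scope.
Set Warnings "-notation-overridden -ambiguous-paths".
Set Implicit Arguments. Unset Strict Implicit. Unset Printing Implicit Defensive.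

Lemma map_meval n (R S : comNzRingType) (f : {rmorphism R -> S}) (P : {mpoly R[n]}) (v : 'I_n -> R) :
  f (P.@[v]) = (map_mpoly f P).@[fun i => f (v i)].
Proof.
elim/mpolyind: P => [|c m P _ _ IH]; first by rewrite (raddf0 (map_mpoly f)) !meval0 rmorph0.
rewrite !raddfD /= IH; congr (_ + _).
rewrite map_mpolyZ map_mpolyX !mevalZ !mevalX rmorphM rmorph_prod /=.
by congr (_ * _); apply: eq_bigr => i _; rewrite rmorphXn.
Qed.

Lemma homog_meval n (R : comNzRingType) d (P : {mpoly R[n]}) (c : R) (v : 'I_n -> R) :
  P \is d.-homog -> P.@[fun i => c * v i] = c ^+ d * P.@[v].
Proof.
move=> hP; rewrite !mevalE mulr_sumr; apply: eq_big_seq => m hm.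
rewrite mulrCA; congr (_ * _).
have -> : (\prod_i (c * v i) ^+ m i) = \prod_i (c ^+ m i * v i ^+ m i).
  by apply: eq_bigr => i _; rewrite exprMn.
rewrite big_split /=; congr (_ * _).
rewrite -(dhomog_mf hP hm) /= (mdegE m).
by rewrite (big_morph (fun k => c ^+ k) (fun a b => exprD c a b) (expr0 c)).
Qed.

Lemma linear_form n (R : comNzRingType) (L : {mpoly R[n]}) :
  L \is 1.-homog -> L = \sum_i L@_U_(i) *: 'X_i.
Proof.
move=> hL; apply/mpolyP => m.
rewrite raddf_sum /=.
under eq_bigr => i _ do rewrite mcoeffZ mcoeffX.
have [/eqP/mdeg1P [k /eqP ->]|nd] := eqVneq (mdeg m) 1%N.
  rewrite (bigD1 k) //= eqxx mulr1 big1 ?addr0 // => i hik.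
  case: eqP => [/mnmP e|]; last by rewrite mulr0.
  by move: (e k); rewrite !mnm1E eqxx (negbTE hik).
rewrite (dhomog_nemf_coeff hL nd) big1 // => i _.
case: eqP => [e|]; last by rewrite mulr0.
by move: nd; rewrite -e mdeg1 eqxx.
Qed.

Lemma linear_meval n (R : comNzRingType) (L : {mpoly R[n]}) (w : 'I_n -> R) :
  L \is 1.-homog -> L.@[w] = \sum_i L@_U_(i) * w i.
Proof.
move=> hL; rewrite {1}(linear_form hL) raddf_sum /=.
by apply: eq_bigr => i _; rewrite mevalZ mevalXU.
Qed.

Lemma digits_inj N n (f g : 'I_n -> nat) :
  (forall i, f i < N)%N -> (forall i, g i < N)%N ->
  (\sum_i f i * N ^ i = \sum_i g i * N ^ i)%N -> f =1 g.
Proof.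
elim: n f g => [|n IH] f g hf hg e i; first by case: i.
move: e; rewrite !big_ord_recl /= !muln1.
have sh (h : 'I_n.+1 -> nat) : (\sum_(i < n) h (lift ord0 i) * N ^ (bump 0 i) =
    N * \sum_(i < n) h (lift ord0 i) * N ^ i)%N.
  rewrite big_distrr /=; apply: eq_bigr => j _.
  by rewrite /bump /= add1n expnS mulnCA.
rewrite !sh => e.
have e0 : f ord0 = g ord0.
  have := congr1 (fun x => x %% N)%N e.
  by rewrite /= (addnC (f ord0)) (addnC (g ord0)) !(mulnC N) !modnMDl !modn_small.
have e1 : (\sum_(i < n) f (lift ord0 i) * N ^ i = \sum_(i < n) g (lift ord0 i) * N ^ i)%N.
  have hN : (0 < N)%N by apply: leq_ltn_trans (hf ord0).
  move: e; rewrite e0 => /addnI /eqP; rewrite eqn_mul2l.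
  by case/orP => [/eqP N0|/eqP //]; move: hN; rewrite N0.
have := IH (fun j => f (lift ord0 j)) (fun j => g (lift ord0 j)) (fun j => hf _) (fun j => hg _) e1.
by case: (unliftP ord0 i) => [j ->|->] //; move=> /(_ j).
Qed.

Section NonRoot.
Variable K : fieldType.
Hypothesis char0 : forall k : nat, (k.+1)%:R != 0 :> K.

Lemma natK_inj : injective (fun i : nat => i%:R : K).
Proof.
have h i j : (i < j)%N -> i%:R != j%:R :> K.
  move=> lt; rewrite -(subnKC (ltnW lt)) natrD.
  have : (j - i)%:R != 0 :> K.
    by case E: (j - i)%N => [|k]; [move: lt; rewrite -subn_gt0 E | exact: char0].
  apply: contra => /eqP e; apply/eqP.
  by apply: (addrI (i%:R)); rewrite addr0 -e.
move=> i j /= e; case: (ltngtP i j) => // lt.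
  by move: (h _ _ lt); rewrite e eqxx.
by move: (h _ _ lt); rewrite e eqxx.
Qed.

Lemma poly_nonroot (Q : {poly K}) : Q != 0 -> exists t, Q.[t] != 0.
Proof.
move=> hQ.
pose rs := [seq i%:R : K | i <- iota 0 (size Q)].
have : ~~ all (root Q) rs.
  apply/negP => hall.
  have hu : uniq rs.
    by rewrite map_inj_uniq ?iota_uniq //; exact: natK_inj.
  have := max_poly_roots hQ hall hu.
  by rewrite size_map size_iota ltnn.
by case/allPn => t _ ht; exists t.
Qed.

Lemma mnm_le_mdeg n (m : 'X_{1..n}) i : (m i <= mdeg m)%N.
Proof. by rewrite mdegE (bigD1 i) //= leq_addr. Qed.

Lemma mpoly_nonroot n (P : {mpoly K[n]}) : P != 0 -> exists v, P.@[v] != 0.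
Proof.
move=> hP.
pose N := msize P.
pose e (m : 'X_{1..n}) := (\sum_i m i * N ^ i)%N.
pose Q : {poly K} := \sum_(m <- msupp P) P@_m *: 'X^(e m).
have hev t : Q.[t] = P.@[fun i => t ^+ (N ^ i)].
  rewrite horner_sum mevalE; apply: eq_bigr => m _.
  rewrite hornerZ hornerXn; congr (_ * _).
  rewrite /e (big_morph (fun k => t ^+ k) (fun a b => exprD t a b) (expr0 t)).
  by apply: eq_bigr => i _; rewrite -exprM mulnC.
have [m0 hm0] : exists m0, m0 \in msupp P.
  case E: (msupp P) => [|m0 s]; last by exists m0; rewrite inE eqxx.
  by move: hP; rewrite -msupp_eq0 E.
have hlt m i : m \in msupp P -> (m i < N)%N.
  by move=> hm; apply: leq_ltn_trans (mnm_le_mdeg m i) (msize_mdeg_lt hm).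
have hQ : Q != 0.
  apply/eqP => /(congr1 (fun q : {poly K} => q`_(e m0))).
  rewrite coef0 coef_sum (bigD1_seq m0) ?msupp_uniq //= big1_seq.
    rewrite coefZ coefXn eqxx mulr1 addr0 => /eqP.
    by rewrite mcoeff_eq0 hm0.
  move=> m /andP [hne hm]; rewrite coefZ coefXn.
  case: eqP => [he|]; last by rewrite mulr0.
  exfalso; move/negP: hne; apply; apply/eqP/mnmP.
  exact: (digits_inj (fun i => hlt m i hm) (fun i => hlt m0 i hm0) (esym he)).
have [t ht] := poly_nonroot hQ.
by exists (fun i => t ^+ (N ^ i)); rewrite -hev.
Qed.

End NonRoot.

Section Proj.
Variable K : fieldType.
Hypothesis char0 : forall k : nat, (k.+1)%:R != 0 :> K.

Lemma proj_div n (L : {mpoly K[n]}) (j : 'I_n) (lq : n.-tuple {mpoly K[n]}) :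
  (forall i, tnth lq i = 'X_i - (if i == j then (L@_U_(j))^-1 *: L else 0)) ->
  forall P, exists D, P - (P \mPo lq) = L * D.
Proof.
move=> hlq.
pose S (P : {mpoly K[n]}) := exists D, P - (P \mPo lq) = L * D.
have SD P Q : S P -> S Q -> S (P + Q).
  move=> [D1 e1] [D2 e2]; exists (D1 + D2).
  rewrite raddfD /= mulrDr -e1 -e2; ring.
have SM P Q : S P -> S Q -> S (P * Q).
  move=> [D1 e1] [D2 e2]; exists (P * D2 + D1 * (Q \mPo lq)).
  have hM : comp_mpoly lq (P * Q) = (P \mPo lq) * (Q \mPo lq).
    exact: (comp_mpoly_is_multiplicative lq).1.
  have eP : P \mPo lq = P - L * D1 by rewrite -e1; ring.
  have eQ : Q \mPo lq = Q - L * D2 by rewrite -e2; ring.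
  rewrite hM eP eQ; ring.
have SC c : S c%:MP.
  by exists 0; rewrite comp_mpolyC subrr mulr0.
have SX i : S 'X_i.
  exists (if i == j then ((L@_U_(j))^-1)%:MP else 0).
  rewrite comp_mpolyXU -tnth_nth hlq opprB addrC subrK.
  by case: eqP => _; rewrite ?mulr0 // mulrC mul_mpolyC.
have SXn i k : S ('X_i ^+ k).
  elim: k => [|k IH]; first by rewrite expr0 -mpolyC1.
  by rewrite exprS; apply: (SM).
move=> P; elim/mpolyind: P => [|c m P _ _ IH].
  by exists 0; rewrite raddf0 subr0 mulr0.
apply: (SD) => //; rewrite -mul_mpolyC; apply: (SM) => //.
rewrite mpolyXE_id; apply: (big_ind S) => //.
by rewrite -mpolyC1.
Qed.

Lemma find_point n (L C : {mpoly K[n]}) :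
  L \is 1.-homog -> L != 0 -> ~ mdivides L C ->
  exists y j, [/\ L@_U_(j) != 0, L.@[y] = 0 & C.@[y] != 0].
Proof.
move=> hL hL0 hdiv.
have [j hj] : exists j, L@_U_(j) != 0.
  case: (pickP (fun i => L@_U_(i) != 0)) => [j hj|h]; first by exists j.
  suff e : L = 0 by rewrite e eqxx in hL0.
  rewrite (linear_form hL) big1 // => i _.
  by move/negbFE/eqP: (h i) ->; rewrite scale0r.
set a := L@_U_(j).
pose lq := [tuple 'X_i - (if i == j then a^-1 *: L else 0) | i < n].
have hlq i : tnth lq i = 'X_i - (if i == j then a^-1 *: L else 0) by rewrite tnth_mktuple.
have hC : C \mPo lq != 0.
  apply/eqP => e; apply: hdiv; have [D hD] := proj_div hlq C.
  by exists D; rewrite -hD e subr0.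
have [w hw] := mpoly_nonroot char0 hC.
exists (fun i => (tnth lq i).@[w]), j; split => //; last by rewrite -comp_mpoly_meval.
rewrite linear_meval //.
under eq_bigr => i _ do rewrite hlq mevalB mevalXU mulrBr.
rewrite sumrB -linear_meval // (bigD1 j) //= eqxx big1 => [|i hij]; last first.
  by rewrite (negbTE hij) meval0 mulr0.
by rewrite addr0 mevalZ mulrA mulfV // mul1r subrr.
Qed.
End Proj.

Lemma clear_den n (a b : 'I_n -> rat) :
  exists (D : rat) (x y : 'I_n -> int), D != 0 /\
    (forall i, (x i)%:~R = D * a i /\ (y i)%:~R = D * b i).
Proof.
pose Dz : int := \prod_i (denq (a i) * denq (b i)).
have hD : Dz != 0.
  by rewrite prodf_seq_neq0; apply/allP => i _; rewrite mulf_neq0 ?denq_neq0.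
have hint (q : rat) (c : int) : (c * denq q)%:~R * q \is a Num.int.
  by rewrite intrM -mulrA [(denq q)%:~R * q]mulrC -numqE rpredM ?rpred_int.
have hx i : exists z : int, z%:~R = Dz%:~R * a i.
  have -> : Dz = (denq (b i) * \prod_(k | k != i) (denq (a k) * denq (b k))) * denq (a i).
    by rewrite /Dz (bigD1 i) //=; ring.
  by have /intrP [z ->] := hint (a i) (denq (b i) * \prod_(k | k != i) (denq (a k) * denq (b k))); exists z.
have hy i : exists z : int, z%:~R = Dz%:~R * b i.
  have -> : Dz = (denq (a i) * \prod_(k | k != i) (denq (a k) * denq (b k))) * denq (b i).
    by rewrite /Dz (bigD1 i) //=; ring.
  by have /intrP [z ->] := hint (b i) (denq (a i) * \prod_(k | k != i) (denq (a k) * denq (b k))); exists z.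
have [x hx'] := fin_all_exists hx; have [y hy'] := fin_all_exists hy.
exists Dz%:~R, x, y; split; first by rewrite intr_eq0.
by move=> i; split.
Qed.

Lemma map_homog n (R S : comNzRingType) (f : {additive R -> S}) (P : {mpoly R[n]}) d :
  P \is d.-homog -> map_mpoly f P \is d.-homog.
Proof.
move=> /dhomogP hP; apply/dhomogP => m hm; apply: hP.
move: hm; rewrite !mcoeff_msupp mcoeff_map_mpoly; apply: contra => /eqP ->.
by rewrite raddf0.
Qed.

Lemma map_map_int n (S : comNzRingType) (f : {rmorphism rat -> S}) (F : {mpoly int[n]}) :
  map_mpoly f (map_mpoly (fun z : int => (z%:~R : rat)) F) = map_mpoly (fun z : int => (z%:~R : S)) F.
Proof.
by apply/mpolyP => m; rewrite !mcoeff_map_mpoly; exact: (rmorph_int f).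
Qed.
Section Basic.
Variables (p : nat) (K : fieldType) (abs : K -> rat).
Hypotheses (hp : prime p) (hK : is_Qp p abs).

Lemma abs_ge0 x : 0 <= abs x. Proof. exact: (Qp_abs_ge0 hK x). Qed.
Lemma abs0 : abs 0 = 0. Proof. exact: (proj2 (Qp_abs_eq0 hK 0) erefl). Qed.
Lemma abs_eq0 x : (abs x == 0) = (x == 0).
Proof. apply/eqP/eqP; [exact: (proj1 (Qp_abs_eq0 hK x)) | move=> ->; exact: abs0]. Qed.
Lemma abs_gt0 x : x != 0 -> 0 < abs x.
Proof. by move=> hx; rewrite lt_def abs_eq0 hx abs_ge0. Qed.
Lemma absM x y : abs (x * y) = abs x * abs y. Proof. exact: (Qp_absM hK x y). Qed.
Lemma abs1 : abs 1 = 1.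
Proof.
have h : abs 1 = abs 1 * abs 1 by rewrite -absM mulr1.
have nz : abs 1 != 0 by rewrite abs_eq0 oner_eq0.
by apply: (mulfI nz); rewrite mulr1 -h.
Qed.
Lemma absN x : abs (- x) = abs x.
Proof.
have h1 : abs (-1) * abs (-1) = 1 by rewrite -absM mulrNN mulr1 abs1.
have h0 : 0 <= abs (-1) := abs_ge0 _.
have e : abs (-1) = 1 by nra.
by rewrite -mulN1r absM e mul1r.
Qed.
Lemma absB x y : abs (x - y) = abs (y - x).
Proof. by rewrite -absN opprB. Qed.
Lemma absV x : abs (x^-1) = (abs x)^-1.
Proof.
have [->|hx] := eqVneq x 0; first by rewrite invr0 abs0 invr0.
have : abs x * abs x^-1 = 1 by rewrite -absM mulfV // abs1.
have nz : abs x != 0 by rewrite abs_eq0.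
by move=> h; apply: (mulfI nz); rewrite h mulfV.
Qed.
Lemma absX x k : abs (x ^+ k) = abs x ^+ k.
Proof. by elim: k => [|k IH]; rewrite ?expr0 ?abs1 // !exprS absM IH. Qed.
Lemma abs_ultra x y : abs (x + y) <= Num.max (abs x) (abs y).
Proof. exact: (Qp_abs_ultra hK x y). Qed.
Lemma abs_addlt x y e : abs x < e -> abs y < e -> abs (x + y) < e.
Proof. move=> h1 h2; apply: le_lt_trans (abs_ultra x y) _; by rewrite gt_max h1 h2. Qed.
Lemma abs_addle x y e : abs x <= e -> abs y <= e -> abs (x + y) <= e.
Proof. move=> h1 h2; apply: le_trans (abs_ultra x y) _; by rewrite ge_max h1 h2. Qed.
Lemma abs_iso x y : abs (x - y) < abs y -> abs x = abs y.
Proof.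
move=> h.
have h1 : abs x <= abs y.
  by rewrite -[x](subrK y); apply: abs_addle => //; exact: ltW.
apply/eqP; rewrite eq_le h1 /=.
rewrite leNgt; apply/negP => hxy.
have : abs ((y - x) + x) < abs y by apply: abs_addlt => //; rewrite absB.
by rewrite subrK ltxx.
Qed.

Lemma abs_ratr q : abs (ratr q) = padic_abs p q. Proof. exact: (Qp_abs_rat hK q). Qed.

Lemma padic_abs_neq0 q : q != 0 -> padic_abs p q != 0.
Proof.
move=> hq; rewrite /padic_abs (negbTE hq) expfz_neq0 // pnatr_eq0.
by rewrite -lt0n prime_gt0.
Qed.

Lemma char0K n : (n.+1)%:R != 0 :> K.
Proof.
rewrite -ratr_nat -abs_eq0 abs_ratr; apply: padic_abs_neq0.
by rewrite pnatr_eq0.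
Qed.

Lemma intrK_eq0 (z : int) : (z%:~R == 0 :> K) = (z == 0).
Proof.
case: z => [[|n]|n] //=; first by rewrite eqxx.
  by rewrite (negbTE (char0K n)).
by rewrite NegzE mulrNz oppr_eq0 (negbTE (char0K n)).
Qed.


Lemma nz_denK (x : rat) : (denq x)%:~R != 0 :> K.
Proof. by rewrite intrK_eq0 denq_eq0. Qed.

Lemma ratrK_zmod : zmod_morphism (@ratr K).
Proof.
have injZtoQ: @injective rat int intr by apply: intr_inj.
have nz_den := nz_denK.
move=> x y.
apply: (canLR (mulfK (nz_den _))); apply: (mulIf (nz_den x)).
rewrite mulrAC mulrBl divfK ?nz_den // mulrAC -!rmorphM.
apply: (mulIf (nz_den y)); rewrite mulrAC mulrBl divfK ?nz_den //.
rewrite -!(rmorphM, rmorphB); congr _%:~R; apply: injZtoQ.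
rewrite !(rmorphM, rmorphB) /= [_ - _]lock /= -lock !numqE.
by rewrite (mulrAC y) -!mulrBl -mulrA mulrAC !mulrA.
Qed.

Lemma ratrK_monoid : monoid_morphism (@ratr K).
Proof.
have injZtoQ: @injective rat int intr by apply: intr_inj.
have nz_den := nz_denK.
split=> [|x y]; first by rewrite /ratr divr1.
rewrite /ratr mulrC mulrAC; apply: canLR (mulKf (nz_den _)) _; rewrite !mulrA.
do 2!apply: canRL (mulfK (nz_den _)) _; rewrite -!rmorphM; congr _%:~R.
apply: injZtoQ; rewrite !rmorphM [x * y]lock /= !numqE -lock.
by rewrite -!mulrA mulrA mulrCA -!mulrA (mulrCA y).
Qed.

Definition ratK : {rmorphism rat -> K} :=
  HB.pack (@ratr K) (GRing.isZmodMorphism.Build _ _ _ ratrK_zmod)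
    (GRing.isMonoidMorphism.Build _ _ _ ratrK_monoid).

Lemma ratKE q : ratK q = ratr q. Proof. by []. Qed.


Section Cont.
Variable n : nat.
Variable y : 'I_n -> K.

Definition cont (f : ('I_n -> K) -> K) :=
  forall eps, 0 < eps -> exists2 d, 0 < d &
    forall w, (forall i, abs (w i - y i) < d) -> abs (f w - f y) < eps.

Lemma cont_ext f g : f =1 g -> cont f -> cont g.
Proof.
move=> e hf eps he; have [d hd H] := hf eps he; exists d => // w hw.
by rewrite -!e; apply: H.
Qed.

Lemma cont_const c : cont (fun _ => c).
Proof. by move=> eps he; exists 1 => // w _; rewrite subrr abs0. Qed.

Lemma cont_proj i : cont (fun w => w i).
Proof. by move=> eps he; exists eps. Qed.

Lemma cont_add f g : cont f -> cont g -> cont (fun w => f w + g w).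
Proof.
move=> hf hg eps he.
have [d1 hd1 H1] := hf eps he; have [d2 hd2 H2] := hg eps he.
exists (Num.min d1 d2); first by rewrite lt_min hd1 hd2.
move=> w hw.
have h1 : forall i, abs (w i - y i) < d1 by move=> i; have := hw i; rewrite lt_min => /andP[].
have h2 : forall i, abs (w i - y i) < d2 by move=> i; have := hw i; rewrite lt_min => /andP[].
have -> : f w + g w - (f y + g y) = (f w - f y) + (g w - g y) by ring.
by apply: abs_addlt; [apply: H1 | apply: H2].
Qed.

Lemma small_div (eps b : rat) : 0 < eps -> 0 <= b ->
  exists2 e, 0 < e & e * (b + 1) = eps.
Proof.
move=> he hb; exists (eps / (b + 1)).
  by apply: divr_gt0 => //; lra.
by rewrite divfK //; apply/lt0r_neq0; lra.
Qed.

Lemma cont_mul f g : cont f -> cont g -> cont (fun w => f w * g w).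
Proof.
move=> hf hg eps he.
have [e1 he1 E1] := small_div he (abs_ge0 (g y)).
have [e2 he2 E2] := small_div he (abs_ge0 (f y)).
have he1' : 0 < Num.min 1 e1 by rewrite lt_min ltr01 he1.
have [d1 hd1 H1] := hf _ he1'; have [d2 hd2 H2] := hg _ he2.
exists (Num.min d1 d2); first by rewrite lt_min hd1 hd2.
move=> w hw.
have h1 : forall i, abs (w i - y i) < d1 by move=> i; have := hw i; rewrite lt_min => /andP[].
have h2 : forall i, abs (w i - y i) < d2 by move=> i; have := hw i; rewrite lt_min => /andP[].
have := H1 w h1; rewrite lt_min => /andP [F1 F2].
have G := H2 w h2.
have -> : f w * g w - f y * g y = f w * (g w - g y) + (f w - f y) * g y by ring.
have hfw : abs (f w) <= abs (f y) + 1.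
  rewrite -[f w](subrK (f y)); apply: abs_addle.
    by have := abs_ge0 (f y); lra.
  by have := abs_ge0 (f y); lra.
apply: abs_addlt; rewrite absM.
  have := abs_ge0 (f w); have := abs_ge0 (g w - g y); have := abs_ge0 (f y); nra.
have := abs_ge0 (f w - f y); have := abs_ge0 (g y); nra.
Qed.

Lemma cont_sum (I : Type) (s : seq I) (F : I -> ('I_n -> K) -> K) :
  (forall i, cont (F i)) -> cont (fun w => \sum_(i <- s) F i w).
Proof.
move=> hF; elim: s => [|i s IH].
  by apply: (cont_ext (f := fun _ => 0)) => [w|]; rewrite ?big_nil //; exact: cont_const.
apply: (cont_ext (f := fun w => F i w + \sum_(j <- s) F j w)) => [w|]; first by rewrite big_cons.
exact: cont_add.
Qed.

Lemma cont_prod (I : Type) (s : seq I) (F : I -> ('I_n -> K) -> K) :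
  (forall i, cont (F i)) -> cont (fun w => \prod_(i <- s) F i w).
Proof.
move=> hF; elim: s => [|i s IH].
  by apply: (cont_ext (f := fun _ => 1)) => [w|]; rewrite ?big_nil //; exact: cont_const.
apply: (cont_ext (f := fun w => F i w * \prod_(j <- s) F j w)) => [w|]; first by rewrite big_cons.
exact: cont_mul.
Qed.

Lemma cont_exp f k : cont f -> cont (fun w => f w ^+ k).
Proof.
move=> hf; elim: k => [|k IH].
  by apply: (cont_ext (f := fun _ => 1)) => [w|]; rewrite ?expr0 //; exact: cont_const.
apply: (cont_ext (f := fun w => f w * f w ^+ k)) => [w|]; first by rewrite exprS.
exact: cont_mul.
Qed.

Lemma cont_meval (P : {mpoly K[n]}) : cont (fun w => P.@[w]).
Proof.
apply: (cont_ext (f := fun w => \sum_(m <- msupp P) (P@_m * \prod_i w i ^+ m i))).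
  by move=> w; rewrite mevalE.
apply: cont_sum => m; apply: cont_mul; first exact: cont_const.
apply: (cont_ext (f := fun w => \prod_(i <- index_enum 'I_n) w i ^+ m i)).
  by move=> w.
by apply: cont_prod => i; apply: cont_exp; exact: cont_proj.
Qed.

End Cont.

Lemma abs_ratr_p : abs (ratr (p%:R)) = (p%:R)^-1.
Proof.
have hp0 : (p%:R : rat) != 0 by rewrite pnatr_eq0 -lt0n prime_gt0.
rewrite abs_ratr /padic_abs (negbTE hp0) /padic_val.
have -> : (p%:R : rat) = (p%:Z)%:~R by [].
have lp : logn p p = 1%N by rewrite -{2}(expn1 p) pfactorK.
rewrite numq_int denq_int /= logn1 lp /= subr0.
by rewrite exprN1.
Qed.

Lemma small_elt (b : rat) : 0 < b -> exists2 s : K, s != 0 & abs s < b.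
Proof.
move=> hb.
have hp0 : (0 < p)%N by rewrite prime_gt0.
have hp1 : (1 < p)%N by rewrite prime_gt1.
pose N := Num.Def.archi_bound b^-1.
have hN : b^-1 < N%:R by apply: archi_boundP; rewrite invr_ge0 ltW.
exists (ratr (p%:R) ^+ N).
  rewrite expf_neq0 // -abs_eq0 abs_ratr_p invr_eq0 pnatr_eq0 -lt0n //.
rewrite absX abs_ratr_p.
have hpN : (N%:R : rat) < (p ^ N)%:R by rewrite ltr_nat ltn_expl.
have hP : (0 : rat) < (p ^ N)%:R by rewrite ltr0n expn_gt0 hp0.
rewrite exprVn -natrX.
rewrite -(ltr_pM2l hP) mulfV ?gt_eqF //.
have h0 : b^-1 < (p ^ N)%:R by apply: lt_trans hN hpN.
have h : b^-1 * b < (p ^ N)%:R * b by rewrite ltr_pM2r.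
by rewrite mulVf ?gt_eqF in h.
Qed.

Lemma approx n (P : {mpoly K[n]}) (u : 'I_n -> K) (eta : rat) : 0 < eta ->
  exists a : 'I_n -> rat, abs (P.@[fun i => ratr (a i)] - P.@[u]) < eta.
Proof.
move=> he; have [d hd H] := cont_meval u P he.
have : forall i, exists q : rat, abs (u i - ratr q) < d.
  by move=> i; exact: (Qp_Q_dense hK (u i) hd).
case/fin_all_exists => a ha; exists a; apply: H => i; by rewrite absB.
Qed.

Lemma est (z al s CP CQ c0 A' B' : K) (eps th eta : rat) :
  0 < eps -> al != 0 -> s != 0 -> c0 != 0 ->
  abs (CP - c0) < th -> abs (CQ - c0) < th -> th <= abs c0 ->
  th * (abs z + 1) <= eps * abs c0 ->
  eta = (abs al * abs s * abs c0) * Num.min (1/2) (eps / (2 * (abs z + 1))) ->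
  abs (B' - al * s * CP) < eta -> abs (A' - al * s * z * CQ) < eta ->
  B' != 0 /\ abs (z - A' / B') < eps.
Proof.
move=> he hal hs hc0 hP hQ hth1 hth2 heta hB hA.
set Z := abs z.
have hZ : 0 <= Z := abs_ge0 z.
have hal' := abs_gt0 hal; have hs' := abs_gt0 hs; have hc0' := abs_gt0 hc0.
set beta := abs al * abs s * abs c0.
have hbeta : 0 < beta by rewrite /beta !mulr_gt0.
have hCP : abs CP = abs c0 by apply: abs_iso; apply: lt_le_trans hP hth1.
have hBabs : abs (al * s * CP) = beta by rewrite !absM hCP.
set m := Num.min (1/2 : rat) (eps / (2 * (Z + 1))).
have hm1 : m <= 1/2 by rewrite /m ge_min lexx.
have hm2 : m * (2 * (Z + 1)) <= eps.
  have : m <= eps / (2 * (Z + 1)) by rewrite /m ge_min lexx orbT.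
  rewrite ler_pdivlMr //; lra.
have hm0 : 0 < m by rewrite /m lt_min; apply/andP; split; [lra | apply: divr_gt0 => //; lra].
have heta0 : eta <= beta * (1/2) by rewrite heta ler_wpM2l // ltW.
have heta1 : eta < beta by apply: le_lt_trans heta0 _; lra.
have hB'abs : abs B' = beta.
  rewrite -hBabs; apply: abs_iso; rewrite hBabs; exact: lt_trans hB heta1.
have hB0 : B' != 0 by rewrite -abs_eq0 hB'abs gt_eqF.
split => //.
have -> : z - A' / B' = (z * (B' - al * s * CP) + al * s * z * (CP - CQ) + (al * s * z * CQ - A')) / B'.
  by field.
rewrite absM absV hB'abs.
suff : abs (z * (B' - al * s * CP) + al * s * z * (CP - CQ) + (al * s * z * CQ - A')) < eps * beta.
  by move=> h; rewrite ltr_pdivrMr // mulrC.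
have hebeta : 0 < eps * beta by rewrite mulr_gt0.
apply: abs_addlt; first apply: abs_addlt.
- rewrite absM -/Z.
  rewrite heta in hB.
  have h1 : Z * abs (B' - al * s * CP) <= Z * (beta * m) by rewrite ler_wpM2l // ltW.
  have h2 : beta * (m * (2 * (Z + 1))) <= beta * eps by rewrite ler_wpM2l // ltW.
  have hbm : 0 < beta * m by rewrite mulr_gt0.
  lra.
- rewrite !absM -/Z.
  have hd : abs (CP - CQ) < th.
    have -> : CP - CQ = (CP - c0) + - (CQ - c0) by ring.
    by apply: abs_addlt; rewrite ?absN.
  have := abs_ge0 (CP - CQ).
  have : abs al * abs s * Z * abs (CP - CQ) <= abs al * abs s * Z * th.
    by apply: ler_wpM2l; [rewrite !mulr_ge0 // abs_ge0|exact: ltW].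
  have hth : 0 < th by apply: le_lt_trans hd; exact: abs_ge0.
  have hu : 0 < abs al * abs s by rewrite mulr_gt0.
  have h3 : (abs al * abs s) * (th * (Z + 1)) <= (abs al * abs s) * (eps * abs c0).
    by rewrite ler_wpM2l // ltW.
  have h4 : 0 < (abs al * abs s) * th by rewrite mulr_gt0.
  rewrite /beta; lra.
- rewrite absB; apply: lt_le_trans hA _; rewrite heta.
  have h2 : beta * (m * (2 * (Z + 1))) <= beta * eps by rewrite ler_wpM2l // ltW.
  have hbm : 0 < beta * m by rewrite mulr_gt0.
  have hbmZ : 0 <= beta * m * Z by rewrite mulr_ge0 // ltW.
  change (beta * m <= eps * beta); lra.
Qed.
End Basic.

Unset Implicit Arguments.

Theorem lemma2p10 (p : nat) (K : fieldType) (abs : K -> rat)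
  (hp : prime p) (hK : is_Qp p abs)
  (r : nat) (F : {mpoly int[r.+1]})
  (hF : exists d : nat, F \is d.-homog)
  (hL : exists L : {mpoly K[r.+1]},
      [/\ L != 0, L \is 1.-homog,
          mdivides L (map_mpoly (fun z : int => (z%:~R : K)) F)
        & ~ mdivides (L ^+ 2) (map_mpoly (fun z : int => (z%:~R : K)) F)]) :
  dense_in abs (ratio_set F).
Proof.
have char0 := char0K hp hK.
case: hF => d hd.
case: hL => L [hL0 hL1 [C hC] hnd].
set FK := map_mpoly (fun z : int => (z%:~R : K)) F in hC hnd.
have hnd' : ~ mdivides L C.
  by case=> D hD; apply: hnd; exists D; rewrite hC hD expr2 mulrA.
have [y [j [ha hy hc]]] := find_point char0 hL1 hL0 hnd'.
set al := L@_U_(j) in ha.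
set c0 := C.@[y] in hc.
move=> z eps heps.
have hZ : 0 <= abs z := abs_ge0 hK z.
have hc0 : 0 < abs c0 := abs_gt0 hK hc.
have hZ1 : 0 < abs z + 1 by lra.
pose th := Num.min (abs c0) (eps * abs c0 / (abs z + 1)).
have hth : 0 < th by rewrite lt_min hc0 /= divr_gt0 // mulr_gt0.
have hth1 : th <= abs c0 by rewrite ge_min lexx.
have hth2 : th * (abs z + 1) <= eps * abs c0.
  have : th <= eps * abs c0 / (abs z + 1) by rewrite /th ge_min lexx orbT.
  by rewrite ler_pdivlMr.
have [dl hdl Hdl] := cont_meval hK y C hth.
have hb : 0 < dl / (abs z + 1) by rewrite divr_gt0.
have [s hs0 hs] := small_elt hp hK hb.
have hs1 : abs s * (abs z + 1) < dl by rewrite -ltr_pdivlMr.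
have hs_ge := abs_ge0 hK s.
have hsz : 0 <= abs s * abs z by rewrite mulr_ge0.
pose Pp := fun i => y i + (if i == j then s else 0).
pose Qp := fun i => y i + (if i == j then s * z else 0).
have hPp : forall i, abs (Pp i - y i) < dl.
  move=> i; rewrite /Pp addrAC subrr add0r; case: eqP => _; last by rewrite (abs0 hK).
  lra.
have hQp : forall i, abs (Qp i - y i) < dl.
  move=> i; rewrite /Qp addrAC subrr add0r; case: eqP => _; last by rewrite (abs0 hK).
  rewrite (absM hK); lra.
have CP := Hdl Pp hPp; have CQ := Hdl Qp hQp.
rewrite /= -/c0 in CP CQ.
have lin (t : K) : L.@[fun i => y i + (if i == j then t else 0)] = al * t.
  rewrite linear_meval //.
  under eq_bigr => i _ do rewrite mulrDr.
  rewrite big_split /= -linear_meval // hy add0r (bigD1 j) //= eqxx big1 ?addr0 //.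
  by move=> i hij; rewrite (negbTE hij) mulr0.
have FP : FK.@[Pp] = al * s * C.@[Pp] by rewrite hC mevalM lin.
have FQ : FK.@[Qp] = al * s * z * C.@[Qp] by rewrite hC mevalM lin mulrA.
pose eta := abs al * abs s * abs c0 * Num.min (1/2) (eps / (2 * (abs z + 1))).
have heta : 0 < eta.
  rewrite /eta !mulr_gt0 ?(abs_gt0 hK) // lt_min; apply/andP; split; first lra.
  by rewrite divr_gt0 //; lra.
have [a ha'] := approx hK FK Qp heta.
have [b hb'] := approx hK FK Pp heta.
rewrite FP in hb'; rewrite FQ in ha'.
have [hB0 hfin] := est hK heps ha hs0 hc CP CQ hth1 hth2 erefl hb' ha'.
have [D [xi [yi [hD hxy]]]] := clear_den a b.
pose rK := ratK hp hK.
pose FQr := map_mpoly (fun z : int => (z%:~R : rat)) F.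
have evalQ (w : 'I_r.+1 -> rat) : ratr (FQr.@[w]) = FK.@[fun i => ratr (w i)].
  by have := map_meval rK FQr w; rewrite map_map_int.
have hFKd : FK \is d.-homog by apply: map_homog.
have eX : ratr (FQr.@[fun i => (xi i)%:~R]) = (ratr D) ^+ d * FK.@[fun i => ratr (a i)].
  rewrite evalQ -homog_meval //; apply: meval_eq => i /=.
  by rewrite (hxy i).1; exact: (rmorphM rK).
have eY : ratr (FQr.@[fun i => (yi i)%:~R]) = (ratr D) ^+ d * FK.@[fun i => ratr (b i)].
  rewrite evalQ -homog_meval //; apply: meval_eq => i /=.
  by rewrite (hxy i).2; exact: (rmorphM rK).
have hrD : ratr D != 0 :> K by rewrite -[ratr D]/(rK D) fmorph_eq0.
have hY : FQr.@[fun i => (yi i)%:~R] != 0.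
  apply/eqP => e; move: eY; rewrite e -[ratr 0]/(rK 0) rmorph0 => /esym/eqP.
  by rewrite mulf_eq0 expf_eq0 (negbTE hrD) andbF (negbTE hB0).
exists (FQr.@[fun i => (xi i)%:~R] / FQr.@[fun i => (yi i)%:~R]); split.
  by exists xi, yi; split.
rewrite -[ratr _]/(rK _) fmorph_div /= eX eY invfM mulrACA mulfV ?expf_neq0 // mul1r.
exact: hfin.
Qed.
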